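(* Let $R$ be a principal ideal domain and $I$ an ideal of $R[X]$ with $I\cap R = Rd$. If the image of $I$ in $(R/dR)[X]$ is generated by a single element which is a non-zero-divisor of $(R/dR)[X]$, then $I$ is power stable.
   Context: An ideal $I$ of the polynomial ring $R[X]$ over an integral domain $R$ is called power stable if $I^t\cap R = (I\cap R)^t$ for all integers $t\geq 1$. *)

(* Defs.v *)
From HB Require Import structures.
From mathcomp Require Import all_boot all_order all_algebra.
Set Implicit Arguments. Unset Strict Implicit. Unset Printing Implicit Defensive.
Import GRing.Theory.
Local Open Scope ring_scope.

Definition is_ideal (T : comRingType) (I : T -> Prop) : Prop :=
  I 0 /\ (forall x y, I x -> I y -> I (x + y)) /\ (forall a x, I x -> I (a * x)).

Definition is_PID (R : idomainType) : Prop :=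
  forall J : R -> Prop, is_ideal J ->
    exists a : R, forall x, J x <-> exists c : R, x = c * a.

Inductive gen_ideal (T : comRingType) (S : T -> Prop) : T -> Prop :=
| gi_in x : S x -> gen_ideal S x
| gi_zero : gen_ideal S 0
| gi_add x y : gen_ideal S x -> gen_ideal S y -> gen_ideal S (x + y)
| gi_mul a x : gen_ideal S x -> gen_ideal S (a * x).

Definition ideal_mul (T : comRingType) (I J : T -> Prop) : T -> Prop :=
  gen_ideal (fun z => exists a b, I a /\ J b /\ z = a * b).

Fixpoint ideal_pow (T : comRingType) (I : T -> Prop) (t : nat) : T -> Prop :=
  match t with
  | O => fun _ => True
  | S t' => ideal_mul (ideal_pow I t') I
  end.

Definition contract (R : comRingType) (I : {poly R} -> Prop) : R -> Prop :=
  fun c => I c%:P.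

Definition power_stable (R : comRingType) (I : {poly R} -> Prop) : Prop :=
  forall t : nat, (1 <= t)%N ->
    forall c : R, contract (ideal_pow I t) c <-> ideal_pow (contract I) t c.

(* Congruence modulo d R[X], i.e. equality of images in (R/dR)[X]
   (the kernel of R[X] -> (R/dR)[X] is exactly d R[X]). *)
Definition cong_mod (R : comRingType) (d : R) (p q : {poly R}) : Prop :=
  exists r : {poly R}, p - q = d%:P * r.

(* Main.v *)
Require Import Defs.
From HB Require Import structures.
From mathcomp Require Import all_boot all_order all_algebra.
Import GRing.Theory.
Local Open Scope ring_scope.

Fixpoint Rep (R : idomainType) (I : {poly R} -> Prop) (d : R) (g : {poly R})
  (t : nat) (p : {poly R}) : Prop :=
  match t with
  | O => True
  | S t' => exists a q, I (d%:P * a) /\ @Rep R I d g t' q /\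
            p = d%:P ^+ t'.+1 * a + g * q
  end.
Arguments Rep {R}.

Lemma Rep_closed (R : idomainType) (I : {poly R} -> Prop) (hI : is_ideal I)
  (d : R) (g : {poly R}) (t : nat) :
  Rep I d g t 0 /\ (forall x y, Rep I d g t x -> Rep I d g t y -> Rep I d g t (x + y))
  /\ (forall h x, Rep I d g t x -> Rep I d g t (h * x)).
Proof.
case: hI => [I0 [IA IM]].
elim: t => [|t [R0 [RA RM]]] //=.
split; [|split].
- exists 0, 0; split; first by rewrite mulr0.
  by split => //; rewrite !mulr0 addr0.
- move=> x y [a [q [Ia [Rq ->]]]] [a' [q' [Ia' [Rq' ->]]]].
  exists (a + a'), (q + q'); split; first by rewrite mulrDr; apply: IA.
  split; first by apply: RA.
  rewrite !mulrDr; exact: addrACA.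
- move=> h x [a [q [Ia [Rq ->]]]].
  exists (h * a), (h * q); split; first by rewrite mulrCA; apply: IM.
  split; first by apply: RM.
  rewrite mulrDr [h * (_ * a)]mulrCA [h * (g * q)]mulrCA; reflexivity.
Qed.

Lemma Rep_mul (R : idomainType) (I : {poly R} -> Prop) (hI : is_ideal I)
  (d : R) (g : {poly R}) (hg : I g)
  (hdec : forall y, I y -> exists h r, I (d%:P * r) /\ y = g * h + d%:P * r) :
  forall t x y, Rep I d g t x -> I y -> Rep I d g t.+1 (x * y).
Proof.
have hI' := hI; case: hI' => [I0 [IA IM]].
elim=> [|t IH] x y Rx Iy; have [h [r [Ir Ey]]] := hdec y Iy.
- exists (x * r), (x * h); split; first by rewrite mulrCA; apply: IM.
  split => //.
  rewrite Ey expr1 mulrDr addrC [x * (_ * r)]mulrCA [x * (g * h)]mulrCA.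
  reflexivity.
- case: Rx => [a [q [Ia [Rq Ex]]]].
  have [R0 _] := @Rep_closed _ _ hI d g t.
  have [_ [RA _]] := @Rep_closed _ _ hI d g t.+1.
  exists (a * r), (q * y + d%:P ^+ t.+1 * (a * h)); split.
    by rewrite mulrCA; apply: IM.
  split.
    apply: RA; first exact: IH.
    exists (a * h), 0; split.
      by rewrite mulrA [d%:P * a * h]mulrC; apply: IM.
    by split => //; rewrite mulr0 addr0.
  rewrite Ex mulrDl mulrDr.
  have e1 : d%:P ^+ t.+1 * a * y =
     g * (d%:P ^+ t.+1 * (a * h)) + d%:P ^+ t.+2 * (a * r).
    rewrite Ey mulrDr; congr (_ + _).
      by rewrite mulrCA -mulrA.
    by rewrite mulrACA -exprSr.
  rewrite e1 -[g * q * y]mulrA addrAC addrC [_ + g * (q * y)]addrC.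
  reflexivity.
Qed.

Lemma Rep_I (R : idomainType) (I : {poly R} -> Prop) (hI : is_ideal I)
  (d : R) (g : {poly R}) (hg : I g) t p : Rep I d g t.+1 p -> I p.
Proof.
case: hI => [I0 [IA IM]] [a [q [Ia [_ ->]]]].
apply: IA; last by rewrite mulrC; apply: IM.
by rewrite exprSr -mulrA; apply: IM.
Qed.

Lemma Rep_div (R : idomainType) (I : {poly R} -> Prop)
  (d : R) (g : {poly R}) (hd : d != 0)
  (hz : forall q, cong_mod d (g * q) 0 -> cong_mod d q 0) :
  forall t p P, Rep I d g t.+1 p -> p = d%:P * P -> Rep I d g t P.
Proof.
elim=> [|t IH] p P // [a [q [Ia [Rq Ep]]]] EP.
have [Q EQ] : cong_mod d q 0.
  apply: hz; exists (P - d%:P ^+ t.+1 * a).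
  rewrite subr0 mulrBr -EP mulrA -exprS Ep addrC addKr; reflexivity.
rewrite subr0 in EQ.
exists a, Q; split => //; split; first exact: (IH q Q).
have hd' : d%:P != 0 by rewrite polyC_eq0.
apply: (mulfI hd'); rewrite -EP Ep mulrDr mulrA -exprS EQ mulrCA.
reflexivity.
Qed.

Lemma Rep_const (R : idomainType) (I : {poly R} -> Prop) (hI : is_ideal I)
  (d : R) (g : {poly R}) (hg : I g)
  (hId : forall c : R, contract I c <-> exists e : R, c = e * d)
  (hz : forall q, cong_mod d (g * q) 0 -> cong_mod d q 0) :
  forall t c, Rep I d g t c%:P -> exists e, c = e * d ^+ t.
Proof.
elim=> [|t IH] c Rc; first by exists c; rewrite expr0 mulr1.
have [e Ec] := (hId c).1 (@Rep_I _ _ hI d g hg t _ Rc).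
have [d0|hd] := eqVneq d 0.
  by exists 0; rewrite Ec d0 !mulr0 mul0r.
have Ec' : c%:P = d%:P * e%:P by rewrite Ec polyCM mulrC.
have [e' Ee'] := IH e (@Rep_div _ I d g hd hz t _ _ Rc Ec').
by exists e'; rewrite Ec Ee' exprSr mulrA.
Qed.

Lemma pow_contains (T : comNzRingType) (J : T -> Prop) (d : T) (hJ : J d) :
  forall t e, ideal_pow J t (e * d ^+ t).
Proof.
elim=> [|t IH] e //=.
apply: gi_in; exists (e * d ^+ t), d; split; first exact: IH.
by split => //; rewrite exprSr mulrA.
Qed.

Lemma pow_principal (T : comNzRingType) (J : T -> Prop) (d : T)
  (hJ : forall x, J x <-> exists e, x = e * d) :
  forall t x, ideal_pow J t x <-> exists e, x = e * d ^+ t.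
Proof.
move=> t x; split; last first.
  by move=> [e ->]; apply: pow_contains; apply/hJ; exists 1; rewrite mul1r.
elim: t x => [|t IH] x /=; first by exists x; rewrite expr0 mulr1.
elim.
- move=> z [a [b [Ia [Jb ->]]]].
  have [e1 ->] := IH a Ia; have [e2 ->] := (hJ b).1 Jb.
  by exists (e1 * e2); rewrite exprSr mulrACA.
- by exists 0; rewrite mul0r.
- move=> y z _ [e1 ->] _ [e2 ->]; exists (e1 + e2); by rewrite mulrDl.
- move=> a y _ [e ->]; exists (a * e); by rewrite mulrA.
Qed.

Lemma pow_Rep (R : idomainType) (I : {poly R} -> Prop) (hI : is_ideal I)
  (d : R) (g : {poly R}) (hg : I g)
  (hdec : forall y, I y -> exists h r, I (d%:P * r) /\ y = g * h + d%:P * r) :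
  forall t p, ideal_pow I t p -> Rep I d g t p.
Proof.
elim=> [|t IH] p //= H.
have [R0 [RA RM]] := @Rep_closed _ _ hI d g t.+1.
elim: H.
- move=> z [a [b [Ia [Ib ->]]]].
  exact: (@Rep_mul _ _ hI d g hg hdec t a b (IH a Ia) Ib).
- exact: R0.
- by move=> x y _ Hx _ Hy; apply: RA.
- by move=> a x _ Hx; apply: RM.
Qed.

Theorem theorem3p3 (R : idomainType) (hPID : is_PID R)
  (I : {poly R} -> Prop) (hI : is_ideal I) (d : R)
  (hId : forall c : R, contract I c <-> exists e : R, c = e * d)
  (hgen : exists f : {poly R},
      (* the image of f lies in the image of I *)
      (exists g, I g /\ cong_mod d f g) /\
      (* the image of I is contained in the ideal generated by the image of f *)
      (forall g, I g -> exists h, cong_mod d g (h * f)) /\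
      (* the image of f is a non-zero-divisor of (R/dR)[X] *)
      (forall h, cong_mod d (h * f) 0 -> cong_mod d h 0)) :
  power_stable I.
Proof.
have hI' := hI; case: hI' => [I0 [IA IM]].
case: hgen => f [[g [Ig [s Es]]] [hdecf hnzd]].
have Ef : f = g + d%:P * s by rewrite -Es addrC subrK.
have hz : forall q, cong_mod d (g * q) 0 -> cong_mod d q 0.
  move=> q [u Eu]; apply: hnzd; exists (u + q * s).
  rewrite subr0 in Eu; rewrite subr0 Ef mulrDr [q * g]mulrC Eu mulrDr mulrCA.
  reflexivity.
have hdec : forall y, I y -> exists h r, I (d%:P * r) /\ y = g * h + d%:P * r.
  move=> y Iy; have [h [r0 Er0]] := hdecf y Iy.
  have E : d%:P * (h * s + r0) = y - g * h.
    rewrite mulrDr mulrCA -Es -Er0 mulrBr addrC addrA subrK [h * g]mulrC.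
    reflexivity.
  exists h, (h * s + r0); split.
    by rewrite E; apply: IA => //; rewrite -mulrN mulrC; apply: IM.
  by rewrite E addrC subrK.
move=> t _ c; split.
- move=> H; apply: (proj2 (@pow_principal _ _ _ hId t c)); exact: (@Rep_const _ _ hI d g Ig hId hz t c
                    (@pow_Rep _ _ hI d g Ig hdec t _ H)).
- move=> H; have [e ->] := proj1 (@pow_principal _ _ _ hId t c) H; rewrite /contract polyCM rmorphXn.
  apply: pow_contains; exact: (hId d).2 (ex_intro _ 1 (esym (mul1r d))).
Qed.
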